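(* Let $(\mathcal{S},\mathcal{R})$ be an $r$-complete positive presentation satisfying: (C$_r$) $\mathcal{R}$ contains no relation $su=sv$ with $s\in\mathcal{S}$ and $u\neq v$; (E$_r$) there exists a set $\mathcal{S}'$ with $\mathcal{S}\subseteq\mathcal{S}'\subseteq\mathcal{S}^*$ such that for all $u,v\in\mathcal{S}'$ there exist $u',v'\in\mathcal{S}'$ satisfying $(uv')^{-1}(vu')\curvearrowright_r\varepsilon$. Then: (i) for all words $\mathbf{w},\mathbf{w}'$ on $\mathcal{S}\cup\mathcal{S}^{-1}$, $\mathbf{w}\equiv^{\pm}\mathbf{w}'$ holds if and only if there exist $u,v,w,u',v',w'\in\mathcal{S}^*$ with $\mathbf{w}\curvearrowright_r vu^{-1}$, $\mathbf{w}'\curvearrowright_r v'u'^{-1}$, $uw\equiv u'w'$ and $vw\equiv v'w'$; (ii) for all $u,u'\in\mathcal{S}^*$, $u\equiv^{\pm}u'$ holds if and only if there exists $w\in\mathcal{S}^*$ with $uw\equiv u'w$.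
   Context: A positive presentation is a pair $(\mathcal{S},\mathcal{R})$ where $\mathcal{S}$ is a nonempty set of letters and $\mathcal{R}$ is a family of relations $u=v$, i.e. unordered pairs $\{u,v\}$ of nonempty words in the free monoid $\mathcal{S}^*$ (letters are regarded as length-one words). $\varepsilon$ denotes the empty word; $\equiv$ is the smallest congruence on $\mathcal{S}^*$ containing all pairs of $\mathcal{R}$. Let $\mathcal{S}^{-1}=\{s^{-1}:s\in\mathcal{S}\}$ be a disjoint copy of $\mathcal{S}$; $\equiv^{\pm}$ is the smallest congruence on $(\mathcal{S}\cup\mathcal{S}^{-1})^*$ containing all pairs of $\mathcal{R}$ and all pairs $\{ss^{-1},\varepsilon\}$, $\{s^{-1}s,\varepsilon\}$ for $s\in\mathcal{S}$. For $u\in\mathcal{S}^*$, $u^{-1}$ is obtained by reversing the order of the letters of $u$ and replacing each $s$ by $s^{-1}$. Right reversing: for words $\mathbf{w},\mathbf{w}'$ on $\mathcal{S}\cup\mathcal{S}^{-1}$ we write $\mathbf{w}\curvearrowright_r\mathbf{w}'$ if $\mathbf{w}'$ is obtained from $\mathbf{w}$ by a finite (possibly empty) sequence of steps, each of which either deletes a subword $u^{-1}u$ with $u\in\mathcal{S}^*$ nonempty, or replaces a subword $u^{-1}v$ with $u,v\in\mathcal{S}^*$ nonempty by a word $v'u'^{-1}$ with $u',v'\in\mathcal{S}^*$ such that $uv'=vu'$ is a relation of $\mathcal{R}$. $(\mathcal{S},\mathcal{R})$ is $r$-complete if for all $u,v,u',v'\in\mathcal{S}^*$ with $uv'\equiv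 vu'$ there exist $u'',v'',w\in\mathcal{S}^*$ with $u^{-1}v\curvearrowright_r v''u''^{-1}$, $u'\equiv u''w$ and $v'\equiv v''w$. *)

(* Defs.v *)
From Stdlib Require Import List Relations.
Import ListNotations.
Set Implicit Arguments.

Section Defs.
Variable S : Type.

Inductive sletter : Type := Pos (s : S) | Neg (s : S).

(** Positive word u seen as a signed word, and its formal inverse u^{-1}. *)
Definition pw (u : list S) : list sletter := map Pos u.
Definition iw (u : list S) : list sletter := rev (map Neg u).

(** A family of relations: a predicate on pairs of words; the relations are
    unordered pairs, so [rel_of R x y] means {x,y} is a relation of R. *)
Definition rel_of (R : list S -> list S -> Prop) (x y : list S) : Prop :=
  R x y \/ R y x.

Definition positive_presentation (R : list S -> list S -> Prop) : Prop :=
  inhabited S /\ (forall u v, R u v -> u <> [] /\ v <> []).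

Inductive pequiv (R : list S -> list S -> Prop) : list S -> list S -> Prop :=
| pe_rel : forall a b u v, R u v -> pequiv R (a ++ u ++ b) (a ++ v ++ b)
| pe_refl : forall u, pequiv R u u
| pe_sym : forall u v, pequiv R u v -> pequiv R v u
| pe_trans : forall u v w, pequiv R u v -> pequiv R v w -> pequiv R u w.

Inductive sequiv (R : list S -> list S -> Prop) :
    list sletter -> list sletter -> Prop :=
| se_rel : forall a b u v, R u v -> sequiv R (a ++ pw u ++ b) (a ++ pw v ++ b)
| se_pn : forall a b s, sequiv R (a ++ [Pos s; Neg s] ++ b) (a ++ b)
| se_np : forall a b s, sequiv R (a ++ [Neg s; Pos s] ++ b) (a ++ b)
| se_refl : forall w, sequiv R w w
| se_sym : forall w w', sequiv R w w' -> sequiv R w' w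
| se_trans : forall w1 w2 w3, sequiv R w1 w2 -> sequiv R w2 w3 -> sequiv R w1 w3.

Inductive rev_step (R : list S -> list S -> Prop) :
    list sletter -> list sletter -> Prop :=
| rs_del : forall a b u, u <> [] ->
    rev_step R (a ++ iw u ++ pw u ++ b) (a ++ b)
| rs_rel : forall a b u v u' v', u <> [] -> v <> [] ->
    rel_of R (u ++ v') (v ++ u') ->
    rev_step R (a ++ iw u ++ pw v ++ b) (a ++ pw v' ++ iw u' ++ b).

Definition reverses (R : list S -> list S -> Prop) : relation (list sletter) :=
  clos_refl_trans _ (rev_step R).

Definition r_complete (R : list S -> list S -> Prop) : Prop :=
  forall u v u' v' : list S,
    pequiv R (u ++ v') (v ++ u') ->
    exists u'' v'' w : list S,
      reverses R (iw u ++ pw v) (pw v'' ++ iw u'') /\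
      pequiv R u' (u'' ++ w) /\ pequiv R v' (v'' ++ w).

Definition cond_Cr (R : list S -> list S -> Prop) : Prop :=
  forall (s : S) (u v : list S), R (s :: u) (s :: v) -> u = v.

Definition cond_Er (R : list S -> list S -> Prop) : Prop :=
  exists S' : list S -> Prop,
    (forall s : S, S' [s]) /\
    forall u v, S' u -> S' v ->
      exists u' v', S' u' /\ S' v' /\
        reverses R (iw (u ++ v') ++ pw (v ++ u')) [].

End Defs.

(* Main.v *)
Require Import Defs.
From Stdlib Require Import List Relations Lia.
Import ListNotations.

Lemma pe_app_l {S} (R : list S -> list S -> Prop) a x y :
  pequiv R x y -> pequiv R (a ++ x) (a ++ y).
Proof.
  induction 1.
  - rewrite !app_assoc. rewrite <- (app_assoc (a ++ a0) u), <- (app_assoc (a ++ a0) v). now constructor.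
  - apply pe_refl.
  - now apply pe_sym.
  - eapply pe_trans; eauto.
Qed.

Lemma pe_app_r {S} (R : list S -> list S -> Prop) b x y :
  pequiv R x y -> pequiv R (x ++ b) (y ++ b).
Proof.
  induction 1.
  - rewrite <- !app_assoc. now constructor.
  - apply pe_refl.
  - now apply pe_sym.
  - eapply pe_trans; eauto.
Qed.

Lemma pe_app {S} (R : list S -> list S -> Prop) x y x' y' :
  pequiv R x y -> pequiv R x' y' -> pequiv R (x ++ x') (y ++ y').
Proof.
  intros. eapply pe_trans. apply pe_app_r; eauto. apply pe_app_l; eauto.
Qed.

Lemma pe_eq {S} (R : list S -> list S -> Prop) x y : x = y -> pequiv R x y.
Proof. intros ->; apply pe_refl. Qed.

Lemma pe_rel1 {S} (R : list S -> list S -> Prop) u v : rel_of R u v -> pequiv R u v.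
Proof.
  intros [H|H].
  - pose proof (pe_rel R [] [] _ _ H). simpl in H0. now rewrite !app_nil_r in H0.
  - apply pe_sym. pose proof (pe_rel R [] [] _ _ H). simpl in H0. now rewrite !app_nil_r in H0.
Qed.

Lemma iw_cons {S} (s : S) u : iw (s :: u) = iw u ++ [Neg s].
Proof. reflexivity. Qed.

Lemma iw_app {S} (u v : list S) : iw (u ++ v) = iw v ++ iw u.
Proof. unfold iw. now rewrite map_app, rev_app_distr. Qed.

Lemma pw_app {S} (u v : list S) : pw (u ++ v) = pw u ++ pw v.
Proof. unfold pw. now rewrite map_app. Qed.

Lemma iw_length {S} (u : list S) : length (iw u) = length u.
Proof. unfold iw. now rewrite length_rev, length_map. Qed.
Lemma pw_length {S} (u : list S) : length (pw u) = length u.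
Proof. unfold pw. now rewrite length_map. Qed.

Lemma se_ctx {S} (R : list S -> list S -> Prop) c d x y :
  sequiv R x y -> sequiv R (c ++ x ++ d) (c ++ y ++ d).
Proof.
  induction 1.
  - replace (c ++ (a ++ pw u ++ b) ++ d) with ((c ++ a) ++ pw u ++ (b ++ d)) by (now rewrite <- !app_assoc).
    replace (c ++ (a ++ pw v ++ b) ++ d) with ((c ++ a) ++ pw v ++ (b ++ d)) by (now rewrite <- !app_assoc).
    constructor; auto.
  - replace (c ++ (a ++ [Pos s; Neg s] ++ b) ++ d) with ((c ++ a) ++ [Pos s; Neg s] ++ (b ++ d)) by (now rewrite <- !app_assoc).
    replace (c ++ (a ++ b) ++ d) with ((c ++ a) ++ (b ++ d)) by (now rewrite <- !app_assoc).
    constructor.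
  - replace (c ++ (a ++ [Neg s; Pos s] ++ b) ++ d) with ((c ++ a) ++ [Neg s; Pos s] ++ (b ++ d)) by (now rewrite <- !app_assoc).
    replace (c ++ (a ++ b) ++ d) with ((c ++ a) ++ (b ++ d)) by (now rewrite <- !app_assoc).
    constructor.
  - apply se_refl.
  - now apply se_sym.
  - eapply se_trans; eauto.
Qed.

Lemma se_eq {S} (R : list S -> list S -> Prop) x y : x = y -> sequiv R x y.
Proof. intros ->; apply se_refl. Qed.

Lemma se_pe {S} (R : list S -> list S -> Prop) u v : pequiv R u v -> sequiv R (pw u) (pw v).
Proof.
  induction 1.
  - rewrite !pw_app. now constructor.
  - apply se_refl.
  - now apply se_sym.
  - eapply se_trans; eauto.
Qed.

Lemma se_ip {S} (R : list S -> list S -> Prop) u : sequiv R (iw u ++ pw u) [].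
Proof.
  induction u as [|s u IH].
  - apply se_refl.
  - eapply se_trans; [|exact IH].
    replace (iw (s :: u) ++ pw (s :: u)) with (iw u ++ [Neg s; Pos s] ++ pw u)
      by (unfold iw, pw; simpl; now rewrite <- !app_assoc).
    constructor.
Qed.

Lemma se_pi {S} (R : list S -> list S -> Prop) u : sequiv R (pw u ++ iw u) [].
Proof.
  induction u as [|s u IH].
  - apply se_refl.
  - replace (pw (s :: u) ++ iw (s :: u)) with ([Pos s] ++ (pw u ++ iw u) ++ [Neg s])
      by (unfold iw, pw; simpl; now rewrite <- !app_assoc).
    eapply se_trans. apply se_ctx. exact IH.
    apply (se_pn R [] [] s).
Qed.

Lemma se_iw {S} (R : list S -> list S -> Prop) u v : pequiv R u v -> sequiv R (iw u) (iw v).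
Proof.
  intro H. apply se_pe in H.
  apply se_trans with (iw u ++ (pw v ++ iw v) ++ []).
  { pose proof (se_ctx R (iw u) [] _ _ (se_sym (se_pi R v))) as K. simpl in K. now rewrite app_nil_r in K. }
  rewrite app_nil_r.
  apply se_trans with (iw u ++ pw u ++ iw v).
  { apply se_ctx. now apply se_sym. }
  pose proof (se_ctx R [] (iw v) _ _ (se_ip R u)) as K. simpl in K. now rewrite <- app_assoc in K.
Qed.
Lemma rs_sound {S} (R : list S -> list S -> Prop) w w' : rev_step R w w' -> sequiv R w w'.
Proof.
  destruct 1 as [a b u Hu | a b u v u' v' Hu Hv Hr].
  - pose proof (se_ctx R a b _ _ (se_ip R u)) as K. simpl in K. now rewrite <- app_assoc in K.
  - rewrite (app_assoc (iw u)), (app_assoc (pw v')). apply se_ctx.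
    apply pe_rel1 in Hr.
    apply se_trans with (iw u ++ (pw v ++ (pw u' ++ iw u'))).
    { pose proof (se_ctx R (iw u ++ pw v) [] _ _ (se_sym (se_pi R u'))) as K.
      rewrite !app_nil_r, <- !app_assoc in K. exact K. }
    rewrite (app_assoc (pw v)), <- pw_app.
    apply se_trans with (iw u ++ pw (u ++ v') ++ iw u').
    { apply se_ctx. apply se_pe. now apply pe_sym. }
    rewrite pw_app, app_assoc.
    pose proof (se_ctx R [] (pw v' ++ iw u') _ _ (se_ip R u)) as K.
    simpl in K. rewrite <- !app_assoc in K |- *. rewrite <- (app_assoc (pw u)). exact K.
Qed.

Lemma rev_sound {S} (R : list S -> list S -> Prop) w w' : reverses R w w' -> sequiv R w w'.
Proof.
  induction 1.
  - now apply rs_sound.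
  - apply se_refl.
  - eapply se_trans; eauto.
Qed.

Lemma rs_ctx {S} (R : list S -> list S -> Prop) c d x y :
  rev_step R x y -> rev_step R (c ++ x ++ d) (c ++ y ++ d).
Proof.
  destruct 1.
  - replace (c ++ (a ++ iw u ++ pw u ++ b) ++ d) with ((c ++ a) ++ iw u ++ pw u ++ (b ++ d)) by (now rewrite <- !app_assoc).
    replace (c ++ (a ++ b) ++ d) with ((c ++ a) ++ (b ++ d)) by (now rewrite <- !app_assoc).
    now constructor.
  - replace (c ++ (a ++ iw u ++ pw v ++ b) ++ d) with ((c ++ a) ++ iw u ++ pw v ++ (b ++ d)) by (now rewrite <- !app_assoc).
    replace (c ++ (a ++ pw v' ++ iw u' ++ b) ++ d) with ((c ++ a) ++ pw v' ++ iw u' ++ (b ++ d)) by (now rewrite <- !app_assoc).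
    now constructor.
Qed.

Lemma rev_ctx {S} (R : list S -> list S -> Prop) c d x y :
  reverses R x y -> reverses R (c ++ x ++ d) (c ++ y ++ d).
Proof.
  induction 1.
  - apply rt_step. now apply rs_ctx.
  - apply rt_refl.
  - eapply rt_trans; eauto.
Qed.

Fixpoint allNeg {S} (w : list (sletter S)) : Prop :=
  match w with [] => True | Neg _ :: w => allNeg w | Pos _ :: _ => False end.
Fixpoint isPN {S} (w : list (sletter S)) : Prop :=
  match w with [] => True | Pos _ :: w => isPN w | Neg _ :: w => allNeg w end.

Lemma allNeg_app {S} (x y : list (sletter S)) : allNeg x -> allNeg y -> allNeg (x ++ y).
Proof. induction x as [|[s|s] x IH]; simpl; auto. Qed.

Lemma allNeg_iw {S} (u : list S) : allNeg (iw u).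
Proof. induction u; simpl; auto. unfold iw in *. simpl. apply allNeg_app; simpl; auto. Qed.

Lemma allNeg_isPN {S} (w : list (sletter S)) : allNeg w -> isPN w.
Proof. destruct w as [|[s|s] w]; simpl; tauto. Qed.

Lemma isPN_pi {S} (v u : list S) : isPN (pw v ++ iw u).
Proof. induction v; simpl; auto. apply allNeg_isPN, allNeg_iw. Qed.

Lemma allNeg_NP {S} c (x y : S) d : ~ allNeg (c ++ Neg x :: Pos y :: d).
Proof. induction c as [|[s|s] c IH]; simpl; auto. Qed.

Lemma isPN_NP {S} c (x y : S) d : ~ isPN (c ++ Neg x :: Pos y :: d).
Proof. induction c as [|[s|s] c IH]; simpl; auto. apply allNeg_NP. Qed.

Lemma pw_cons {S} (s : S) u : pw (s :: u) = Pos s :: pw u.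
Proof. reflexivity. Qed.

Lemma rs_notPN {S} (R : list S -> list S -> Prop) w w' : rev_step R w w' -> ~ isPN w.
Proof.
  destruct 1 as [a b u Hu | a b u v u' v' Hu Hv Hr].
  - destruct u as [|x u]; [congruence|].
    rewrite iw_cons, pw_cons.
    replace (a ++ (iw u ++ [Neg x]) ++ (Pos x :: pw u) ++ b) with ((a ++ iw u) ++ Neg x :: Pos x :: (pw u ++ b)) by (now rewrite <- !app_assoc).
    apply isPN_NP.
  - destruct u as [|x u]; [congruence|]. destruct v as [|y v]; [congruence|].
    rewrite iw_cons, pw_cons.
    replace (a ++ (iw u ++ [Neg x]) ++ (Pos y :: pw v) ++ b) with ((a ++ iw u) ++ Neg x :: Pos y :: (pw v ++ b)) by (now rewrite <- !app_assoc).
    apply isPN_NP.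
Qed.

Lemma rev_stuck {S} (R : list S -> list S -> Prop) w w' : reverses R w w' -> isPN w -> w' = w.
Proof.
  intros H. apply clos_rt_rt1n in H. destruct H as [|y z H1 H2]; auto.
  intro P. exfalso. eapply rs_notPN; eauto.
Qed.

Lemma iw_inj {S} (u v : list S) : iw u = iw v -> u = v.
Proof.
  unfold iw. intro H. apply (f_equal (@rev _)) in H. rewrite !rev_involutive in H.
  revert v H. induction u; destruct v; simpl; intros; try discriminate; auto.
  injection H; intros; f_equal; auto.
Qed.

Lemma pi_inj {S} (a b c d : list S) : pw a ++ iw b = pw c ++ iw d -> a = c /\ b = d.
Proof.
  revert c. induction a as [|x a IH]; intros [|y c]; simpl; intro H.
  - split; auto. now apply iw_inj.
  - exfalso. assert (In (Pos y) (iw b)) by (rewrite H; simpl; auto).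
    unfold iw in H0. apply in_rev, in_map_iff in H0. destruct H0 as [? [? _]]; discriminate.
  - exfalso. assert (In (Pos x) (iw d)) by (rewrite <- H; simpl; auto).
    unfold iw in H0. apply in_rev, in_map_iff in H0. destruct H0 as [? [? _]]; discriminate.
  - injection H; intros. destruct (IH c H0). subst; auto.
Qed.

Fixpoint Fr {S} (R : list S -> list S -> Prop) (w : list (sletter S)) (v u : list S) : Prop :=
  match w with
  | [] => pequiv R v u
  | Pos s :: w => exists v', pequiv R v (s :: v') /\ Fr R w v' u
  | Neg s :: w => Fr R w (s :: v) u
  end.

Lemma pe_cons {S} (R : list S -> list S -> Prop) s a b : pequiv R a b -> pequiv R (s :: a) (s :: b).
Proof. apply (pe_app_l R [s]). Qed.

Lemma Fr_inv {S} (R : list S -> list S -> Prop) w : forall v u v1 u1,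
  pequiv R v v1 -> pequiv R u u1 -> Fr R w v u -> Fr R w v1 u1.
Proof.
  induction w as [|[s|s] w IH]; simpl; intros v u v1 u1 Hv Hu H.
  - eapply pe_trans; [apply pe_sym; eauto|]. eapply pe_trans; eauto.
  - destruct H as [v' [H1 H2]]. exists v'. split; [|eapply IH; eauto using pe_refl].
    eapply pe_trans; [apply pe_sym|]; eauto.
  - eapply IH; eauto. now apply pe_cons.
Qed.

Lemma Fr_rmul {S} (R : list S -> list S -> Prop) w : forall v u z,
  Fr R w v u -> Fr R w (v ++ z) (u ++ z).
Proof.
  induction w as [|[s|s] w IH]; simpl; intros v u z H.
  - now apply pe_app_r.
  - destruct H as [v' [H1 H2]]. exists (v' ++ z). split; [|eapply IH; eauto].
    apply (pe_app_r R z) in H1. exact H1.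
  - apply (IH (s :: v)). exact H.
Qed.

Lemma Fr_app {S} (R : list S -> list S -> Prop) a c : forall v u,
  Fr R (a ++ c) v u <-> exists m, Fr R a v m /\ Fr R c m u.
Proof.
  induction a as [|[s|s] a IH]; simpl; intros v u.
  - split.
    + intro H. exists v. split; auto using pe_refl.
    + intros [m [H1 H2]]. eapply Fr_inv; [apply pe_sym; exact H1| apply pe_refl| exact H2].
  - split.
    + intros [v' [H1 H2]]. apply IH in H2. destruct H2 as [m [H2 H3]]. exists m. split; eauto.
    + intros [m [[v' [H1 H2]] H3]]. exists v'. split; auto. apply IH. eauto.
  - apply IH.
Qed.

Lemma Fr_pw {S} (R : list S -> list S -> Prop) y : forall x z,
  Fr R (pw y) x z <-> pequiv R x (y ++ z).
Proof.
  induction y as [|s y IH]; simpl; intros x z.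
  - tauto.
  - split.
    + intros [v' [H1 H2]]. apply IH in H2. eapply pe_trans; eauto. now apply pe_cons.
    + intro H. exists (y ++ z). split; auto. apply IH. apply pe_refl.
Qed.

Lemma Fr_iw {S} (R : list S -> list S -> Prop) y : forall x z,
  Fr R (iw y) x z <-> pequiv R (y ++ x) z.
Proof.
  induction y as [|s y IH]; intros x z.
  - simpl. tauto.
  - rewrite iw_cons, Fr_app. simpl. split.
    + intros [m [H1 H2]]. apply IH in H1. eapply pe_trans; [|exact H2]. now apply pe_cons.
    + intro H. exists (y ++ x). split; auto. apply IH. apply pe_refl.
Qed.

Definition feq {S} (R : list S -> list S -> Prop) (v u v' u' : list S) : Prop :=
  exists w0 w0', pequiv R (u ++ w0) (u' ++ w0') /\ pequiv R (v ++ w0) (v' ++ w0').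

Definition LCH {S} (R : list S -> list S -> Prop) : Prop :=
  forall s u v, pequiv R (s :: u) (s :: v) -> pequiv R u v.
Definition CMH {S} (R : list S -> list S -> Prop) : Prop :=
  forall u v, exists a b, pequiv R (u ++ a) (v ++ b).

Lemma feq_sym {S} (R : list S -> list S -> Prop) v u v' u' : feq R v u v' u' -> feq R v' u' v u.
Proof. intros [a [b [H1 H2]]]. exists b, a. split; now apply pe_sym. Qed.

Lemma feq_trans {S} (R : list S -> list S -> Prop) : CMH R -> forall v u v' u' v'' u'',
  feq R v u v' u' -> feq R v' u' v'' u'' -> feq R v u v'' u''.
Proof.
  intros CM v u v' u' v'' u'' [a [b [H1 H2]]] [c [d [H3 H4]]].
  destruct (CM b c) as [x [y Hxy]].
  exists (a ++ x), (d ++ y). split.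
  - rewrite !app_assoc. eapply pe_trans. apply pe_app_r. exact H1.
    rewrite <- app_assoc. eapply pe_trans. apply pe_app_l. exact Hxy.
    rewrite app_assoc. apply pe_app_r. exact H3.
  - rewrite !app_assoc. eapply pe_trans. apply pe_app_r. exact H2.
    rewrite <- app_assoc. eapply pe_trans. apply pe_app_l. exact Hxy.
    rewrite app_assoc. apply pe_app_r. exact H4.
Qed.

Lemma Fr_nonempty {S} (R : list S -> list S -> Prop) : CMH R -> forall w, exists v u, Fr R w v u.
Proof.
  intros CM w. induction w as [|[s|s] w [V [U IH]]]; simpl.
  - exists [], []. apply pe_refl.
  - exists (s :: V), U, V. split; auto using pe_refl.
  - destruct (CM V [s]) as [a [b Hab]].
    exists b, (U ++ a). apply (Fr_rmul R w V U a) in IH.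
    eapply Fr_inv; [exact Hab | apply pe_refl | exact IH].
Qed.

Lemma Fr_unique {S} (R : list S -> list S -> Prop) : LCH R -> CMH R -> forall w v u v' u',
  Fr R w v u -> Fr R w v' u' -> feq R v u v' u'.
Proof.
  intros LC CM w. induction w as [|[s|s] w IH]; simpl; intros v u v' u' H H'.
  - destruct (CM u u') as [a [b Hab]]. exists a, b. split; auto.
    eapply pe_trans. apply pe_app_r. exact H. eapply pe_trans. exact Hab.
    apply pe_app_r. now apply pe_sym.
  - destruct H as [x [H1 H2]]. destruct H' as [x' [H1' H2']].
    destruct (IH _ _ _ _ H2 H2') as [a [b [K1 K2]]]. exists a, b. split; auto.
    eapply pe_trans. apply pe_app_r. exact H1. eapply pe_trans; [|apply pe_app_r; apply pe_sym; exact H1'].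
    simpl. now apply pe_cons.
  - destruct (IH _ _ _ _ H H') as [a [b [K1 K2]]]. exists a, b. split; auto.
    simpl in K2. eapply LC. exact K2.
Qed.

Lemma rs_Fr {S} (R : list S -> list S -> Prop) w w' : rev_step R w w' ->
  forall v u, Fr R w' v u -> Fr R w v u.
Proof.
  destruct 1 as [a b u Hu | a b u v u' v' Hu Hv Hr]; intros x y H.
  - apply Fr_app in H. destruct H as [m [H1 H2]].
    apply Fr_app. exists m. split; auto.
    apply Fr_app. exists (u ++ m). split. apply Fr_iw. apply pe_refl.
    apply Fr_app. exists m. split; auto. apply Fr_pw. apply pe_refl.
  - apply Fr_app in H. destruct H as [m [H1 H2]].
    apply Fr_app in H2. destruct H2 as [m1 [H2 H3]].
    apply Fr_app in H3. destruct H3 as [m2 [H3 H4]].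
    apply Fr_pw in H2. apply Fr_iw in H3.
    apply Fr_app. exists m. split; auto.
    apply Fr_app. exists (u ++ m). split. apply Fr_iw. apply pe_refl.
    apply Fr_app. exists m2. split; auto. apply Fr_pw.
    apply pe_rel1 in Hr.
    eapply pe_trans. apply pe_app_l. exact H2. rewrite app_assoc.
    eapply pe_trans. apply pe_app_r. exact Hr. rewrite <- app_assoc. apply pe_app_l. exact H3.
Qed.

Lemma rev_Fr {S} (R : list S -> list S -> Prop) w w' : reverses R w w' ->
  forall v u, Fr R w' v u -> Fr R w v u.
Proof.
  induction 1; intros; eauto. eapply rs_Fr; eauto.
Qed.

Lemma Fr_pi {S} (R : list S -> list S -> Prop) v u : Fr R (pw v ++ iw u) v u.
Proof.
  apply Fr_app. exists []. split. apply Fr_pw. rewrite app_nil_r. apply pe_refl.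
  apply Fr_iw. rewrite app_nil_r. apply pe_refl.
Qed.

Lemma incl_feq {S} (R : list S -> list S -> Prop) : LCH R -> CMH R -> forall w1 w2,
  (forall x y, Fr R w1 x y -> Fr R w2 x y) ->
  forall v u v' u', Fr R w1 v u -> Fr R w2 v' u' -> feq R v u v' u'.
Proof.
  intros LC CM w1 w2 Hi v u v' u' H1 H2.
  eapply (Fr_unique R LC CM w2); eauto.
Qed.

Lemma se_Fr {S} (R : list S -> list S -> Prop) : LCH R -> CMH R -> forall w w',
  sequiv R w w' -> forall v u v' u', Fr R w v u -> Fr R w' v' u' -> feq R v u v' u'.
Proof.
  intros LC CM w w' H. induction H; intros x y x' y' H1 H2.
  - eapply (incl_feq R LC CM); [|exact H1|exact H2]. intros p q K.
    apply Fr_app in K. destruct K as [m [K1 K2]]. apply Fr_app. exists m. split; auto.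
    apply Fr_app in K2. destruct K2 as [m1 [K2 K3]]. apply Fr_app. exists m1. split; auto.
    apply Fr_pw in K2. apply Fr_pw. eapply pe_trans. exact K2. apply pe_app_r.
    pose proof (pe_rel R [] [] u v H) as K. simpl in K. now rewrite !app_nil_r in K.
  - eapply (incl_feq R LC CM); [|exact H1|exact H2]. intros p q K.
    apply Fr_app in K. destruct K as [m [K1 K2]]. apply Fr_app. exists m. split; auto.
    simpl in K2. destruct K2 as [v' [K2 K3]]. eapply Fr_inv; [apply pe_sym; exact K2|apply pe_refl|exact K3].
  - apply feq_sym. eapply (incl_feq R LC CM); [|exact H2|exact H1]. intros p q K.
    apply Fr_app in K. destruct K as [m [K1 K2]]. apply Fr_app. exists m. split; auto.
    simpl. exists m. split; auto. apply pe_refl.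
  - eapply Fr_unique; eauto.
  - apply feq_sym. eauto.
  - destruct (Fr_nonempty R CM w2) as [p [q K]].
    apply (feq_trans R CM x y p q x' y'); [eapply IHsequiv1|eapply IHsequiv2]; eauto.
Qed.

Lemma step_NP {S} (R : list S -> list S -> Prop) (s : S) y :
  cond_Cr R -> rev_step R [Neg s; Pos s] y -> exists x, y = pw x ++ iw x.
Proof.
  intros Cr H. remember [Neg s; Pos s] as L eqn:EL.
  destruct H as [a b u Hu | a b u v u' v' Hu Hv Hr].
  - assert (E := f_equal (@length _) EL). rewrite !length_app, iw_length, pw_length in E. simpl in E.
    destruct u as [|u0 [|u1 u]]; [congruence| |simpl in E; lia].
    destruct a; [|simpl in E; lia]. destruct b; [|simpl in E; lia].
    exists []. reflexivity.
  - assert (E := f_equal (@length _) EL). rewrite !length_app, iw_length, pw_length in E. simpl in E.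
    destruct u as [|u0 u]; [congruence|]. destruct v as [|v0 v]; [congruence|].
    destruct u; [|simpl in E; lia]. destruct v; [|simpl in E; lia].
    destruct a; [|simpl in E; lia]. destruct b; [|simpl in E; lia].
    simpl in EL. injection EL; intros; subst.
    destruct Hr as [Hr|Hr]; apply Cr in Hr; subst; eexists; rewrite app_nil_r; reflexivity.
Qed.

Lemma LC_of {S} (R : list S -> list S -> Prop) : r_complete R -> cond_Cr R -> LCH R.
Proof.
  intros Rc Cr s u v H.
  destruct (Rc [s] [s] v u H) as [u'' [v'' [w [H1 [H2 H3]]]]].
  assert (exists x, pw v'' ++ iw u'' = pw x ++ iw x) as [x Ex].
  { apply clos_rt_rt1n in H1. inversion H1 as [E|y z K1 K2].
    - exfalso. assert (P := isPN_pi v'' u''). rewrite <- E in P. simpl in P. exact P.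
    - destruct (step_NP R s y Cr K1) as [x ->]. exists x.
      apply clos_rt1n_rt in K2. eapply rev_stuck; eauto. apply isPN_pi. }
  apply pi_inj in Ex. destruct Ex; subst.
  eapply pe_trans. exact H3. now apply pe_sym.
Qed.

Lemma CM_of {S} (R : list S -> list S -> Prop) : cond_Er R -> CMH R.
Proof.
  intros [P [HP1 HP2]].
  assert (G1 : forall v x, P x -> exists y v', P y /\ pequiv R (x ++ v') (v ++ y)).
  { induction v as [|t v IH]; intros x Px.
    - exists x, []. split; auto. rewrite app_nil_r. apply pe_refl.
    - destruct (HP2 x [t] Px (HP1 t)) as [b [a [Pb [Pa Hr]]]].
      assert (K : pequiv R (x ++ a) ([t] ++ b)).
      { assert (F := rev_Fr R _ _ Hr [] [] (pe_refl R [])).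
        apply Fr_app in F. destruct F as [m [F1 F2]]. apply Fr_iw in F1. apply Fr_pw in F2.
        rewrite app_nil_r in F1, F2. apply pe_trans with m; assumption. }
      destruct (IH b Pb) as [y [v' [Py K2]]].
      exists y, (a ++ v'). split; auto.
      rewrite app_assoc. eapply pe_trans. apply pe_app_r. exact K.
      simpl. now apply pe_cons. }
  intro u. induction u as [|s u IH]; intro v.
  - exists v, []. rewrite app_nil_r. apply pe_refl.
  - destruct (G1 v [s] (HP1 s)) as [y [v' [Py K]]].
    destruct (IH v') as [a [b Hab]].
    exists a, (y ++ b). simpl.
    eapply pe_trans. apply pe_cons. exact Hab.
    rewrite app_assoc. change (s :: v' ++ b) with (([s] ++ v') ++ b). apply pe_app_r. exact K.
Qed.

Lemma rev_term {S} (R : list S -> list S -> Prop) : r_complete R -> CMH R ->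
  forall w, exists v u, reverses R w (pw v ++ iw u).
Proof.
  intros Rc CM w. induction w as [|[s|s] w [v [u IH]]].
  - exists [], []. apply rt_refl.
  - exists (s :: v), u. pose proof (rev_ctx R [Pos s] [] _ _ IH) as K.
    rewrite !app_nil_r in K. exact K.
  - destruct (CM [s] v) as [a [b Hab]].
    destruct (Rc [s] v b a Hab) as [u'' [v'' [w0 [H1 _]]]].
    exists v'', (u ++ u''). rewrite iw_app.
    eapply rt_trans. pose proof (rev_ctx R [Neg s] [] _ _ IH) as K. rewrite !app_nil_r in K. exact K.
    pose proof (rev_ctx R [] (iw u) _ _ H1) as K. simpl in K. rewrite <- !app_assoc in K. exact K.
Qed.

Lemma frac_ext {S} (R : list S -> list S -> Prop) v u z :
  sequiv R (pw v ++ iw u) (pw (v ++ z) ++ iw (u ++ z)).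
Proof.
  rewrite pw_app, iw_app, <- app_assoc.
  pose proof (se_ctx R (pw v) (iw u) _ _ (se_sym (se_pi R z))) as K. simpl in K.
  now rewrite <- app_assoc in K.
Qed.

Lemma frac_eq {S} (R : list S -> list S -> Prop) v u v' u' :
  pequiv R v v' -> pequiv R u u' -> sequiv R (pw v ++ iw u) (pw v' ++ iw u').
Proof.
  intros H1 H2. apply se_trans with (pw v' ++ iw u).
  - pose proof (se_ctx R [] (iw u) _ _ (se_pe R _ _ H1)). exact H.
  - pose proof (se_ctx R (pw v') [] _ _ (se_iw R _ _ H2)). now rewrite !app_nil_r in H.
Qed.

Theorem proposition7p3 (S : Type) (R : list S -> list S -> Prop) :
  positive_presentation R ->
  r_complete R -> cond_Cr R -> cond_Er R ->
  (forall w w' : list (sletter S),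
     sequiv R w w' <->
     exists u v w0 u' v' w0' : list S,
       reverses R w (pw v ++ iw u) /\
       reverses R w' (pw v' ++ iw u') /\
       pequiv R (u ++ w0) (u' ++ w0') /\
       pequiv R (v ++ w0) (v' ++ w0')) /\
  (forall u u' : list S,
     sequiv R (pw u) (pw u') <-> exists w : list S, pequiv R (u ++ w) (u' ++ w)).
Proof.
  intros _ Rc Cr Er.
  pose proof (LC_of R Rc Cr) as LC. pose proof (CM_of R Er) as CM.
  assert (I : forall w w' : list (sletter S),
     sequiv R w w' <->
     exists u v w0 u' v' w0' : list S,
       reverses R w (pw v ++ iw u) /\
       reverses R w' (pw v' ++ iw u') /\
       pequiv R (u ++ w0) (u' ++ w0') /\
       pequiv R (v ++ w0) (v' ++ w0')).
  { intros w w'. split.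
    - intro H. destruct (rev_term R Rc CM w) as [v [u Hw]].
      destruct (rev_term R Rc CM w') as [v' [u' Hw']].
      destruct (se_Fr R LC CM w w' H v u v' u' (rev_Fr R _ _ Hw _ _ (Fr_pi R v u))
                  (rev_Fr R _ _ Hw' _ _ (Fr_pi R v' u'))) as [w0 [w0' [K1 K2]]].
      exists u, v, w0, u', v', w0'. auto.
    - intros (u & v & w0 & u' & v' & w0' & H1 & H2 & H3 & H4).
      apply rev_sound in H1. apply rev_sound in H2.
      eapply se_trans. exact H1. eapply se_trans. apply (frac_ext R v u w0).
      eapply se_trans. apply (frac_eq R _ _ _ _ H4 H3).
      eapply se_trans. apply se_sym. apply (frac_ext R v' u' w0'). now apply se_sym. }
  split; [exact I|].
  intros u u'. split.
  - intro H. apply I in H. destruct H as (x & v & w0 & x' & v' & w0' & H1 & H2 & H3 & H4).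
    assert (P : forall y, isPN (pw y : list (sletter S))).
    { intro y. pose proof (isPN_pi y []) as P. simpl in P. now rewrite app_nil_r in P. }
    apply rev_stuck in H1; [|apply P]. apply rev_stuck in H2; [|apply P].
    rewrite <- (app_nil_r (pw u)) in H1. rewrite <- (app_nil_r (pw u')) in H2.
    change ([] : list (sletter S)) with (iw ([] : list S)) in H1, H2.
    apply pi_inj in H1. apply pi_inj in H2. destruct H1, H2; subst. simpl in H3.
    exists w0. eapply pe_trans. exact H4. apply pe_app_l. now apply pe_sym.
  - intros [w H].
    apply se_trans with (pw u ++ iw []). { simpl. rewrite app_nil_r. apply se_refl. }
    apply se_trans with (pw u' ++ iw []). 2: { simpl. rewrite app_nil_r. apply se_refl. }
    eapply se_trans. apply (frac_ext R u [] w).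
    eapply se_trans. apply (frac_eq R _ _ _ _ H (pe_refl R _)).
    apply se_sym. apply (frac_ext R u' [] w).
Qed.
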